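(* Let $d\ge 2$ be an integer and for $x>0$ let $$\tau_d(x)=\frac{e^{-x}x^d}{d!},\qquad \varphi_d(x)=1-\tau_d(x)-\tau_d(x)\frac{(x-d)^2}{x}.$$ Then $\inf_{x>0}\varphi_d(x)>0$. *)

(* Defs.v *)
From Stdlib Require Import Reals Arith Factorial.
Open Scope R_scope.

Definition tau (d : nat) (x : R) : R := exp (- x) * x ^ d / INR (fact d).

Definition phi (d : nat) (x : R) : R :=
  1 - tau d x - tau d x * (x - INR d) ^ 2 / x.

Definition is_glb (E : R -> Prop) (m : R) : Prop :=
  (forall y, E y -> m <= y) /\ (forall b, (forall y, E y -> b <= y) -> b <= m).

(* Main.v *)
Require Import Defs.
From Stdlib Require Import Reals Lra Psatz Arith Factorial Lia.
From Coquelicot Require Import Coquelicot.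
Open Scope R_scope.

Lemma mono_up (f df : R -> R) a b : a <= b ->
  (forall x, a <= x <= b -> is_derive f x (df x)) ->
  (forall x, a <= x <= b -> 0 <= df x) -> f a <= f b.
Proof.
  intros Hab Hd Hp.
  destruct (MVT_gen f a b df) as [c [Hc Heq]].
  - intros x Hx. apply Hd. rewrite Rmin_left in Hx by lra. rewrite Rmax_right in Hx by lra. lra.
  - intros x Hx. rewrite Rmin_left in Hx by lra. rewrite Rmax_right in Hx by lra.
    apply continuity_pt_filterlim. apply (@ex_derive_continuous R_AbsRing R_NormedModule f x). exists (df x). apply Hd; lra.
  - rewrite Rmin_left in Hc by lra. rewrite Rmax_right in Hc by lra.
    assert (0 <= df c * (b - a)) by (apply Rmult_le_pos; [apply Hp; lra| lra]). lra.
Qed.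

Lemma mono_down (f df : R -> R) a b : a <= b ->
  (forall x, a <= x <= b -> is_derive f x (df x)) ->
  (forall x, a <= x <= b -> df x <= 0) -> f b <= f a.
Proof.
  intros Hab Hd Hp.
  assert (H := mono_up (fun x => - f x) (fun x => - df x) a b Hab).
  cbv beta in H. cut (- f a <= - f b). lra.
  apply H.
  - intros x Hx. apply (is_derive_opp f x (df x)). apply Hd; auto.
  - intros x Hx. specialize (Hp x Hx). lra.
Qed.

Lemma fact_S_R m : INR (fact (S m)) = INR (S m) * INR (fact m).
Proof. rewrite <- mult_INR. reflexivity. Qed.

Lemma exp_lb (m : nat) : forall x, 0 <= x ->
  1 + x ^ (S m) / INR (fact (S m)) + x ^ (S (S m)) / INR (fact (S (S m))) <= exp x.
Proof.
  induction m as [|m IH]; intros x Hx.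
  - simpl. pose (f := fun t => exp t - (1 + t + t^2/2)).
    assert (f 0 <= f x).
    { apply (mono_up f (fun t => exp t - 1 - t)); [lra| |].
      + intros t _. unfold f. auto_derive; auto. field.
      + intros t _. pose proof (exp_ineq1_le t). lra. }
    unfold f in H. rewrite exp_0 in H. lra.
  - pose (g := fun t => exp t - (1 + t ^ (S (S m)) / INR (fact (S (S m))) + t ^ (S (S (S m))) / INR (fact (S (S (S m)))))).
    assert (g 0 <= g x).
    { apply (mono_up g (fun t => exp t - (t ^ (S m) / INR (fact (S m)) + t ^ (S (S m)) / INR (fact (S (S m)))))); [lra| |].
      + intros t _. unfold g.
        assert (E3 := fact_S_R (S (S m))). assert (E2 := fact_S_R (S m)).
        assert (INR (fact (S m)) <> 0) by (apply not_0_INR; apply fact_neq_0).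
        assert (INR (S (S m)) <> 0) by (apply not_0_INR; lia).
        assert (INR (S (S (S m))) <> 0) by (apply not_0_INR; lia).
        remember (INR (fact (S (S (S m))))) as F3.
        remember (INR (fact (S (S m)))) as F2.
        remember (INR (fact (S m))) as F1.
        rewrite E3, E2 in *.
        auto_derive.
        { exact I. }
        rewrite !S_INR. simpl pred. rewrite !S_INR in *.
        change (match m with | 0%nat => 1 | S _ => INR m + 1 end) with (INR (S m)).
        rewrite !S_INR. simpl pow.
        assert (0 <= INR m) by apply pos_INR.
        field. repeat split; auto; lra.
      + intros t Ht. specialize (IH t ltac:(lra)). lra. }
    unfold g in H. rewrite exp_0 in H. simpl (0 ^ _) in H. lra.
Qed.

Section Main.
Variable n : nat.
Let D := INR (S (S n)).
Let F := INR (fact (S (S n))).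
Definition G x := exp (- x) * x ^ (S n) * (x + (x - D) ^ 2) / F.
Definition dG x := exp (- x) * x ^ n * (D * (x - D) - (x - D) ^ 3) / F.

Lemma F_pos : 0 < F.
Proof. apply lt_0_INR. apply lt_O_fact. Qed.

Lemma D_eq : D = INR n + 2.
Proof. unfold D. rewrite !S_INR. ring. Qed.

Lemma G_der x : is_derive G x (dG x).
Proof.
  unfold G, dG. pose proof F_pos. pose proof D_eq.
  generalize dependent F. generalize dependent D. intros DD HD FF HF.
  auto_derive. { lra. }
  change (match n with | 0%nat => 1 | S _ => INR n + 1 end) with (INR (S n)).
  rewrite S_INR, HD. field. lra.
Qed.

Let s := sqrt D.
Let a := D - s.
Let b := D + s.

Lemma s_facts : s * s = D /\ 1 < s /\ 0 < a.
Proof.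
  assert (HD : 2 <= D) by (rewrite D_eq; pose proof (pos_INR n); lra).
  assert (Hss : s * s = D) by (apply sqrt_sqrt; lra).
  assert (0 <= s) by apply sqrt_pos.
  split; auto. split. nra. unfold a. nra.
Qed.

Lemma dG_form t : dG t = (exp (- t) * t ^ n / F) * ((t - D) * (D - (t - D) ^ 2)).
Proof. unfold dG. pose proof F_pos. field. lra. Qed.

Lemma coef_nonneg t : 0 <= t -> 0 <= exp (- t) * t ^ n / F.
Proof.
  intros Ht. pose proof F_pos. apply Rmult_le_pos. apply Rmult_le_pos.
  apply Rlt_le, exp_pos. apply pow_le; auto. apply Rlt_le, Rinv_0_lt_compat; auto.
Qed.

Lemma G_bound x : 0 < x -> G x <= Rmax (G a) (G b).
Proof.
  intros Hx. destruct s_facts as [Hss [Hs1 Ha]].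
  assert (Hab : a <= D <= b) by (unfold a, b; lra).
  destruct (Rle_lt_dec x D) as [HxD|HxD].
  - apply Rle_trans with (G a); [|apply Rmax_l].
    destruct (Rle_lt_dec x a) as [Hxa|Hxa].
    + apply (mono_up G dG x a Hxa). intros; apply G_der.
      intros t Ht. rewrite dG_form. apply Rmult_le_pos. apply coef_nonneg; lra.
      assert (t - D <= - s) by (unfold a in Ht; lra).
      assert (D <= (t - D) ^ 2) by nra.
      nra.
    + apply (mono_down G dG a x ltac:(lra)). intros; apply G_der.
      intros t Ht. rewrite dG_form.
      assert (0 <= exp (- t) * t ^ n / F) by (apply coef_nonneg; lra).
      assert (- s <= t - D <= 0) by (unfold a in Ht; lra).
      assert ((t - D) ^ 2 <= D) by nra.
      assert (0 <= - (t - D) * (D - (t - D) ^ 2)) by (apply Rmult_le_pos; lra).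
      set (c := exp (- t) * t ^ n / F) in *. set (w := (t - D) * (D - (t - D) ^ 2)).
      assert (0 <= c * - w) by (apply Rmult_le_pos; unfold w; lra). lra.
  - apply Rle_trans with (G b); [|apply Rmax_r].
    destruct (Rle_lt_dec x b) as [Hxb|Hxb].
    + apply (mono_up G dG x b Hxb). intros; apply G_der.
      intros t Ht. rewrite dG_form. apply Rmult_le_pos. apply coef_nonneg; lra.
      assert (0 <= t - D <= s) by (unfold b in Ht; lra).
      assert ((t - D) ^ 2 <= D) by nra.
      nra.
    + apply (mono_down G dG b x ltac:(lra)). intros; apply G_der.
      intros t Ht. rewrite dG_form.
      assert (0 <= exp (- t) * t ^ n / F) by (apply coef_nonneg; lra).
      assert (s <= t - D) by (unfold b in Ht; lra).
      assert (D <= (t - D) ^ 2) by nra.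
      assert (0 <= (t - D) * - (D - (t - D) ^ 2)) by (apply Rmult_le_pos; lra).
      set (c := exp (- t) * t ^ n / F) in *. set (w := (t - D) * (D - (t - D) ^ 2)).
      assert (0 <= c * - w) by (apply Rmult_le_pos; unfold w; lra). lra.
Qed.

Lemma G_crit y : 0 <= y -> (y - D) ^ 2 = D -> G y <= 1 - exp (- y).
Proof.
  intros Hy Hq. pose proof (exp_lb n y Hy) as E.
  assert (HF : F = INR (S (S n)) * INR (fact (S n))) by (unfold F; apply fact_S_R).
  assert (0 < INR (fact (S n))) by (apply lt_0_INR; apply lt_O_fact).
  assert (HG : G y = exp (- y) * (y ^ S n / INR (fact (S n)) + y ^ S (S n) / F)).
  { unfold G. rewrite Hq. rewrite HF. fold D. rewrite D_eq. simpl pow. field.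
    pose proof (pos_INR n). lra. }
  rewrite HG. fold F in E.
  assert (exp (- y) * exp y = 1) by (rewrite <- exp_plus; replace (- y + y) with 0 by ring; apply exp_0).
  pose proof (exp_pos (- y)). nra.
Qed.

Lemma phi_G x : 0 < x -> phi (S (S n)) x = 1 - G x.
Proof.
  intros Hx. unfold phi, tau, G. fold D F. pose proof F_pos. simpl pow. field. lra.
Qed.

Lemma phi_lb : exists c, 0 < c /\ forall x, 0 < x -> c <= phi (S (S n)) x.
Proof.
  destruct s_facts as [Hss [Hs1 Ha]].
  assert (Ga : G a <= 1 - exp (- a)) by (apply G_crit; [lra| unfold a; transitivity (s * s); [ring|auto]]).
  assert (Gb : G b <= 1 - exp (- b)) by (apply G_crit; [unfold b, a in *; lra| unfold b; transitivity (s * s); [ring|auto]]).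
  exists (Rmin (exp (- a)) (exp (- b))). split.
  - apply Rmin_case; apply exp_pos.
  - intros x Hx. rewrite phi_G by auto. pose proof (G_bound x Hx).
    revert H. apply Rmax_case; intros; [pose proof (Rmin_l (exp (-a)) (exp (-b)))|pose proof (Rmin_r (exp (-a)) (exp (-b)))]; lra.
Qed.
End Main.

Theorem lemma3p1 (d : nat) (hd : (2 <= d)%nat) :
  exists m : R, is_glb (fun y => exists x, 0 < x /\ y = phi d x) m /\ 0 < m.
Proof.
  destruct d as [|[|n]]; try lia.
  destruct (phi_lb n) as [c [Hc Hlb]].
  set (E := fun y => exists x, 0 < x /\ y = phi (S (S n)) x).
  destruct (completeness (fun z => E (- z))) as [l [Hub Hl]].
  - exists (- c). intros z [x [Hx Hz]]. specialize (Hlb x Hx). lra.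
  - exists (- phi (S (S n)) 1). exists 1. split; [lra| ring].
  - exists (- l). split; [split|].
    + intros y Hy. assert (E (- - y)) by (rewrite Ropp_involutive; auto).
      specialize (Hub _ H). lra.
    + intros b0 Hb. assert (l <= - b0); [|lra].
      apply Hl. intros z Hz. specialize (Hb _ Hz). lra.
    + assert (l <= - c); [|lra].
      apply Hl. intros z [x [Hx Hz]]. specialize (Hlb x Hx). lra.
Qed.
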